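(* Let $X$ be a graph with real symmetric Hamiltonian $M$ and transition matrix $U(t)=e^{-\mathrm{i}tM}$. Let $a\ne b$ be cospectral vertices of $X$ and $s\in\mathbb{C}\setminus\{0\}$. If $\mathbf e_a+s\mathbf e_b$ is periodic at time $\tau$, i.e. $U(\tau)(\mathbf e_a+s\mathbf e_b)=\eta(\mathbf e_a+s\mathbf e_b)$ for some $|\eta|=1$, then either $s=\pm1$, or both $a$ and $b$ are periodic at time $\tau$, i.e. $U(\tau)\mathbf e_a=\eta\mathbf e_a$ and $U(\tau)\mathbf e_b=\eta\mathbf e_b$.
   Context: Vertices $a,b$ are cospectral (with respect to $M$) if $(M^h)_{a,a}=(M^h)_{b,b}$ for all integers $h\ge0$, equivalently $(E_\lambda)_{a,a}=(E_\lambda)_{b,b}$ for every spectral projection $E_\lambda$ of $M$. *)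

(* Defs.v *)
From HB Require Import structures.
From mathcomp Require Import all_boot all_order all_algebra.
From mathcomp Require Import all_classical all_reals all_analysis.
From mathcomp Require Import complex.
Set Implicit Arguments. Unset Strict Implicit. Unset Printing Implicit Defensive.
Import Order.TTheory GRing.Theory Num.Theory.
Import numFieldNormedType.Exports.
Local Open Scope ring_scope.
Local Open Scope complex_scope.

Definition cmx (R : realType) (n : nat) (M : 'M[R]_n) : 'M[R[i]]_n :=
  map_mx (fun x => x%:C) M.

Definition expterm (R : realType) (n : nat) (M : 'M[R]_n) (t : R)
  (a b : 'I_n) (k : nat) : R[i] :=
  ((- 'i * t%:C) ^+ k / (k`!)%:R) * ((cmx M) ^+ k) a b.

(* Transition matrix U(t) = exp(-i t M), defined entrywise as the (convergent)
   exponential power series; real and imaginary parts are summed separately. *)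
Definition transU (R : realType) (n : nat) (M : 'M[R]_n) (t : R) : 'M[R[i]]_n :=
  \matrix_(a, b)
    ((limn (series (fun k => complex.Re (expterm M t a b k)))) +i*
     (limn (series (fun k => complex.Im (expterm M t a b k))))).

Definition evec (R : realType) (n : nat) (a : 'I_n) : 'cV[R[i]]_n :=
  \col_j (if j == a then 1 else 0).

Definition cospectral (R : realType) (n : nat) (M : 'M[R]_n) (a b : 'I_n) : Prop :=
  forall h : nat, (M ^+ h) a a = (M ^+ h) b b.
Arguments evec {R n} a.

(* Main.v *)
Set Warnings "-all".
Require Import Defs.
From HB Require Import structures.
From mathcomp Require Import all_boot all_order all_algebra.
From mathcomp Require Import all_classical all_reals all_analysis.
From mathcomp Require Import complex ring.
Import Order.TTheory GRing.Theory Num.Theory.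
Import numFieldNormedType.Exports.
Local Open Scope ring_scope.
Local Open Scope complex_scope.
Local Open Scope sesquilinear_scope.
Lemma mul_evec (R : realType) n (U : 'M[R[i]]_n) a j :
  (U *m evec a) j 0 = U j a.
Proof.
rewrite /evec mxE (bigD1 a) //= mxE eqxx mulr1 big1 ?addr0 // => k /negPf kna.
by rewrite mxE kna mulr0.
Qed.

Lemma unit_row (R : realType) n (U : 'M[R[i]]_n) a (eta : R[i]) :
  U \is unitarymx -> U a a = eta -> `|eta| = 1 -> forall j, j != a -> U a j = 0.
Proof.
move=> /unitarymxP /matrixP /(_ a a); rewrite !mxE eqxx /= => H Haa He j ja.
idtac.
have H2 : \sum_k `|U a k| ^+ 2 = 1.
  rewrite -[RHS]H; apply: eq_bigr => k _; rewrite normCK !mxE //.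
move: H2; rewrite (bigD1 a) //= Haa He expr1n => /(congr1 (fun x => x - 1)); rewrite addrC addrK subrr.
move=> /psumr_eq0P => H3.
have := H3 (fun k _ => exprn_ge0 _ (normr_ge0 _)) j ja.
by move=> /eqP; rewrite sqrf_eq0 normr_eq0 => /eqP.
Qed.

Lemma alg_main (R : realType) n (U : 'M[R[i]]_n) (a b : 'I_n) (s eta : R[i]) :
  U^T = U -> U \is unitarymx -> U a a = U b b -> a != b -> `|eta| = 1 ->
  U *m (evec a + s *: evec b) = eta *: (evec a + s *: evec b) ->
  (s = 1 \/ s = -1) \/ (U *m evec a = eta *: evec a /\ U *m evec b = eta *: evec b).
Proof.
move=> Usym Uu Uab ab He H.
have Hs j : U j a + s * U j b = eta * ((if j == a then 1 else 0) + s * (if j == b then 1 else 0)).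
  have := congr1 (fun X : 'cV[R[i]]_n => X j 0) H; rewrite /= mulmxDr -scalemxAr.
  rewrite [LHS]mxE [X in X + _ = _]mul_evec [X in _ + X = _]mxE mul_evec.
  by rewrite /evec !mxE.
have Ut j k : U j k = U k j by rewrite -{1}Usym mxE.
have e1 := Hs a; have e2 := Hs b.
rewrite eqxx (negPf ab) /= mulr0 addr0 mulr1 in e1.
rewrite eqxx eq_sym (negPf ab) /= mulr1 add0r in e2.
have ex : U a b * (1 - s ^+ 2) = 0.
  rewrite (Ut b a) -Uab in e2.
  have : U a b + s * U a a = s * (U a a + s * U a b) by rewrite e1 e2 mulrC.
  move=> E.
  have -> : U a b * (1 - s ^+ 2) = (U a b + s * U a a) - s * (U a a + s * U a b) by ring.
  by rewrite E subrr.
have [s2|s2] := eqVneq (s ^+ 2) 1.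
  by left; move/eqP: s2; rewrite sqrf_eq1 => /orP [] /eqP ->; [left|right].
right.
have xab : U a b = 0.
  by move/eqP: ex; rewrite mulf_eq0 subr_eq0 [1 == _]eq_sym (negPf s2) orbF => /eqP.
have yaa : U a a = eta by rewrite -e1 xab mulr0 addr0.
have ybb : U b b = eta by rewrite -Uab.
have row0 := @unit_row R n U a eta Uu yaa He.
have row1 := @unit_row R n U b eta Uu ybb He.
split; apply/matrixP => j k; rewrite (ord1 k) mul_evec !mxE.
  case: eqVneq => [->|ja]; first by rewrite yaa mulr1.
  by rewrite Ut row0 // mulr0.
case: eqVneq => [->|jb]; first by rewrite ybb mulr1.
by rewrite Ut row1 // mulr0.
Qed.
Lemma cmx_mul (R : realType) n (A B : 'M[R]_n) : cmx (A *m B) = cmx A *m cmx B.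
Proof. by rewrite /cmx map_mxM. Qed.

Lemma cmxX (R : realType) n (M : 'M[R]_n) k : cmx (M ^+ k) = (cmx M) ^+ k.
Proof.
elim: k => [|k IH]; first by rewrite !expr0 /cmx map_mx1.
by rewrite !exprS -!mulmxE cmx_mul IH.
Qed.

Lemma trX (C : comPzRingType) n (A : 'M[C]_n) k : A^T = A -> (A ^+ k)^T = A ^+ k.
Proof.
move=> sA; elim: k => [|k IH]; first by rewrite expr0 trmx1.
by rewrite exprS -mulmxE trmx_mul IH sA !mulmxE -exprSr -exprS.
Qed.

Lemma negi_pow (R : realType) k : (- 'i : R[i]) ^+ k =
  ((~~ odd k)%:R * (-1) ^+ k./2)%:C + 'i * (- ((odd k)%:R * (-1) ^+ k.-1./2))%:C.
Proof.
have := odd_double_half k; set m := k./2; case: (odd k) => /= E.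
  have -> : k.-1./2 = m by rewrite -E /= half_double.
  rewrite -{1}E exprD expr1 -mul2n exprM sqrrN sqr_i.
  rewrite !(rmorphN, rmorphXn, rmorph1, rmorphM, rmorph0, mul0r, mul1r). ring.
rewrite -{1}E add0n -mul2n exprM sqrrN sqr_i.
rewrite !(rmorphN, rmorphXn, rmorph1, rmorphM, rmorph0, mul0r, mul1r). ring.
Qed.

Lemma complexRI (R : realType) (x y : R) : x%:C + 'i * y%:C = x +i* y.
Proof. by rewrite [RHS]complexE. Qed.

Lemma term_eq (R : realType) (th : R) k : (- 'i * th%:C) ^+ k / (k`!)%:R =
  (cos_coeff th k) +i* (- sin_coeff th k).
Proof.
rewrite -complexRI exprMn negi_pow cos_coeffE sin_coeffE /=.
rewrite !(rmorphN, rmorphXn, rmorph1, rmorphM, rmorph0, rmorph_nat, fmorphV).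
ring.
Qed.

Local Open Scope classical_set_scope.
Lemma Re_sum (R : realType) (J : Type) (r : seq J) (f : J -> R[i]) :
  complex.Re (\sum_(j <- r) f j) = \sum_(j <- r) complex.Re (f j).
Proof.
elim: r => [|x r IH]; first by rewrite !big_nil.
by rewrite !big_cons -IH; case: (f x); case: (\sum_(j <- r) f j).
Qed.

Lemma Im_sum (R : realType) (J : Type) (r : seq J) (f : J -> R[i]) :
  complex.Im (\sum_(j <- r) f j) = \sum_(j <- r) complex.Im (f j).
Proof.
elim: r => [|x r IH]; first by rewrite !big_nil.
by rewrite !big_cons -IH; case: (f x); case: (\sum_(j <- r) f j).
Qed.

Lemma cvg_bigsum (R : realType) (J : Type) (r : seq J) (f : J -> nat -> R) (l : J -> R) :
  (forall j, f j @ \oo --> l j) ->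
  (fun k => \sum_(j <- r) f j k) @ \oo --> \sum_(j <- r) l j.
Proof.
move=> H; elim: r => [|x r IH].
  rewrite big_nil; under eq_fun do rewrite big_nil; exact: cvg_cst.
rewrite big_cons; under eq_fun do rewrite big_cons.
exact: cvgD.
Qed.

Lemma cos_cvg (R : realType) (th : R) : series (cos_coeff th) @ \oo --> cos th.
Proof. rewrite unlock. exact: is_cvg_series_cos_coeff. Qed.

Lemma sin_cvg (R : realType) (th : R) : series (sin_coeff th) @ \oo --> sin th.
Proof. rewrite unlock. exact: is_cvg_series_sin_coeff. Qed.

Definition ez (R : realType) (th : R) : R[i] := cos th +i* (- sin th).
Arguments ez {R}.

Lemma lim_ReIm (R : realType) (J : Type) (r : seq J) (w : J -> R[i]) (th : J -> R) :
  series (fun k => complex.Re (\sum_(j <- r) w j * ((- 'i * (th j)%:C)^+k / k`!%:R)))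
    @ \oo --> complex.Re (\sum_(j <- r) w j * ez (th j)) /\
  series (fun k => complex.Im (\sum_(j <- r) w j * ((- 'i * (th j)%:C)^+k / k`!%:R)))
    @ \oo --> complex.Im (\sum_(j <- r) w j * ez (th j)).
Proof.
split.
  have -> : series (fun k => complex.Re (\sum_(j <- r) w j * ((- 'i * (th j)%:C)^+k / k`!%:R)))
    = fun N => \sum_(j <- r) (complex.Re (w j) * series (cos_coeff (th j)) N +
                             complex.Im (w j) * series (sin_coeff (th j)) N).
    apply: funext => N; rewrite /series /=.
    under eq_bigr do rewrite Re_sum.
    rewrite exchange_big /=; apply: eq_bigr => j _.
    rewrite !mulr_sumr -big_split /=; apply: eq_bigr => k _.
    rewrite term_eq; case: (w j) => wr wi /=; ring.
  rewrite Re_sum; apply: cvg_bigsum => j.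
  have -> : complex.Re (w j * ez (th j)) =
     complex.Re (w j) * cos (th j) + complex.Im (w j) * sin (th j).
    by rewrite /ez; case: (w j) => wr wi /=; ring.
  apply: cvgD; apply: cvgMl_tmp; [exact: cos_cvg | exact: sin_cvg].
have -> : series (fun k => complex.Im (\sum_(j <- r) w j * ((- 'i * (th j)%:C)^+k / k`!%:R)))
  = fun N => \sum_(j <- r) (complex.Im (w j) * series (cos_coeff (th j)) N -
                           complex.Re (w j) * series (sin_coeff (th j)) N).
  apply: funext => N; rewrite /series /=.
  under eq_bigr do rewrite Im_sum.
  rewrite exchange_big /=; apply: eq_bigr => j _.
  rewrite !mulr_sumr -sumrB /=; apply: eq_bigr => k _.
  rewrite term_eq; case: (w j) => wr wi /=; ring.
rewrite Im_sum; apply: cvg_bigsum => j.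
have -> : complex.Im (w j * ez (th j)) =
   complex.Im (w j) * cos (th j) - complex.Re (w j) * sin (th j).
  by rewrite /ez; case: (w j) => wr wi /=; ring.
apply: cvgB; apply: cvgMl_tmp; [exact: cos_cvg | exact: sin_cvg].
Qed.

Lemma powdiag (C : comUnitRingType) n (A P : 'M[C]_n) (d : 'rV[C]_n) :
  P \in unitmx -> A = invmx P *m diag_mx d *m P ->
  forall k, A ^+ k = invmx P *m diag_mx (\row_l (d 0 l) ^+ k) *m P.
Proof.
move=> Pu HA; elim => [|k IH].
  have -> : \row_l (d 0 l) ^+ 0 = const_mx 1 by apply/rowP => l; rewrite !mxE expr0.
  by rewrite diag_const_mx mulmx1 mulVmx.
rewrite exprSr -mulmxE IH {1}HA !mulmxA mulmxK // -[invmx P *m _ *m diag_mx d]mulmxA mulmx_diag.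
congr (_ *m diag_mx _ *m _); apply/rowP => l; rewrite !mxE exprSr.
done.
Qed.

Lemma transU_spec (R : realType) n (M : 'M[R]_n) (t : R) :
  M^T = M ->
  transU M t = invmx (spectralmx (cmx M)) *m
     diag_mx (\row_l ez (t * complex.Re (spectral_diag (cmx M) 0 l))) *m spectralmx (cmx M).
Proof.
move=> Msym.
set A := cmx M; set P := spectralmx A; set d := spectral_diag A.
have Areal : A \is a realmx.
  by apply/mxOverP => i j; rewrite mxE; apply/complex_realP; exists (M i j).
have Asym : A \is symmetricmx.
  apply/is_hermitianmxP; rewrite expr0 scale1r map_mx_id //.
  by rewrite /A /cmx map_trmx Msym.
have Aherm := realsym_hermsym Asym Areal.
have HA : A = invmx P *m diag_mx d *m P := elimT (@orthomx_spectralP _ n A) (hermitian_normalmx Aherm).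
have dreal := hermitian_spectral_diag_real Aherm.
have dR l : d 0 l = (complex.Re (d 0 l))%:C.
  by rewrite RRe_real //; exact: (mxOverP dreal).
have Pu : P \in unitmx := spectral_unit A.
have pw := @powdiag _ n A P d Pu HA.
apply/matrixP => j c.
have Eterm k : expterm M t j c k = \sum_(l < n) (invmx P j l * P l c) *
     ((- 'i * (t * complex.Re (d 0 l))%:C)^+k / k`!%:R).
  rewrite /expterm -/A pw mxE mulr_sumr; apply: eq_bigr => l _.
  rewrite mul_mx_diag !mxE (dR l) rmorphM !exprMn; ring.
have [HRe HIm] := @lim_ReIm R _ (index_enum 'I_n) (fun l => invmx P j l * P l c)
   (fun l => t * complex.Re (d 0 l)).
rewrite /transU mxE.
have -> : (fun k => complex.Re (expterm M t j c k)) = fun k => complex.Re (\sum_(l < n) (invmx P j l * P l c) *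
     ((- 'i * (t * complex.Re (d 0 l))%:C)^+k / k`!%:R)) by apply: funext => k; rewrite Eterm.
have -> : (fun k => complex.Im (expterm M t j c k)) = fun k => complex.Im (\sum_(l < n) (invmx P j l * P l c) *
     ((- 'i * (t * complex.Re (d 0 l))%:C)^+k / k`!%:R)) by apply: funext => k; rewrite Eterm.
rewrite (cvg_lim _ HRe) // (cvg_lim _ HIm) //.
rewrite mxE; set X := \sum_(_ <- _) _.
have -> : X = \sum_(l < n) (invmx P *m diag_mx (\row_l ez (t * complex.Re (d 0 l)))) j l * P l c.
  by apply: eq_bigr => l _; rewrite mul_mx_diag !mxE mulrAC.
by case: (\sum_(l < n) _).
Qed.

Lemma ez_norm (R : realType) (th : R) : ez th * Num.conj (ez th) = 1.
Proof.
rewrite /ez.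
have -> : (cos th +i* - sin th) * Num.conj (cos th +i* - sin th) =
  (cos th * cos th - (- sin th) * (- - sin th)) +i* (cos th * (- - sin th) + (- sin th) * cos th) by [].
have E := cos2Dsin2 th.
have -> : cos th * cos th - (- sin th) * (- - sin th) = 1 by rewrite -E; ring.
by have -> : cos th * (- - sin th) + (- sin th) * cos th = 0 by ring.
Qed.

Lemma transU_unitary (R : realType) n (M : 'M[R]_n) (t : R) :
  M^T = M -> transU M t \is unitarymx.
Proof.
move=> Msym; rewrite transU_spec //.
apply: mul_unitarymx; [apply: mul_unitarymx|]; last exact: spectral_unitarymx.
  by rewrite invmx_unitary ?spectral_unitarymx // trmxC_unitary spectral_unitarymx.
apply/unitarymxP; rewrite tr_diag_mx map_diag_mx mulmx_diag -diag_const_mx.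
by congr diag_mx; apply/rowP => l; rewrite !mxE ez_norm.
Qed.

Lemma transU_sym (R : realType) n (M : 'M[R]_n) (t : R) :
  M^T = M -> (transU M t)^T = transU M t.
Proof.
move=> Msym; apply/matrixP => j c; rewrite !mxE.
have sA : (cmx M)^T = cmx M by rewrite /cmx map_trmx Msym.
have E k : expterm M t c j k = expterm M t j c k.
  by rewrite /expterm -[in LHS](@trX _ _ _ k sA) mxE.
have -> : (fun k => complex.Re (expterm M t c j k)) = (fun k => complex.Re (expterm M t j c k))
  by apply: funext => k; rewrite E.
have -> : (fun k => complex.Im (expterm M t c j k)) = (fun k => complex.Im (expterm M t j c k))
  by apply: funext => k; rewrite E.
done.
Qed.

Lemma transU_cosp (R : realType) n (M : 'M[R]_n) (t : R) a b :
  cospectral M a b -> transU M t a a = transU M t b b.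
Proof.
move=> cs; rewrite !mxE.
have E k : expterm M t a a k = expterm M t b b k.
  by rewrite /expterm -cmxX /cmx !mxE cs.
have -> : (fun k => complex.Re (expterm M t a a k)) = (fun k => complex.Re (expterm M t b b k))
  by apply: funext => k; rewrite E.
have -> : (fun k => complex.Im (expterm M t a a k)) = (fun k => complex.Im (expterm M t b b k))
  by apply: funext => k; rewrite E.
done.
Qed.

Local Close Scope classical_set_scope.
Local Close Scope sesquilinear_scope.

Theorem mainTheorem3 (R : realType) (n : nat) (M : 'M[R]_n) (a b : 'I_n)
  (s : R[i]) (tau : R) (eta : R[i]) :
  M^T = M -> a != b -> cospectral M a b -> s != 0 ->
  `|eta| = 1 ->
  transU M tau *m (evec a + s *: evec b) = eta *: (evec a + s *: evec b) ->
  (s = 1 \/ s = -1) \/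
  (transU M tau *m evec a = eta *: evec a /\ transU M tau *m evec b = eta *: evec b).
Proof.
move=> Msym ab cs _ He H.
apply: alg_main => //.
- exact: transU_sym.
- exact: transU_unitary.
- exact: transU_cosp.
Qed.
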